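(* Let $\omega\colon\mathbf Z_+\to(0,+\infty)$ be a positive weight and let $f(z)=\sum_{k\ge3}c_kz^k\in\mathcal X_\omega$ be such that for every $n\ge0$ and every $m\ge1$, \[\frac{c_{(6m+4)2^n}}{\omega((6m+4)2^n)}=\frac{c_{(2m+1)2^n}}{\omega((2m+1)2^n)}\quad\text{and}\quad c_{2^{n+2}}=0.\] Then for every $k\ge3$ with $k\notin\{2^i;\ i\ge2\}$ there exist integer sequences $(m_n)_{n\ge1}$, $(p_n)_{n\ge1}$, $(j_n)_{n\ge1}$ (depending on $k$) such that: (i) $c_k=\big(\omega((2m_1+1)2^{p_1})/\omega((6m_n+4)2^{p_n})\big)\,c_{(6m_n+4)2^{p_n}}$ for every $n\ge1$; (ii) $m_n\ge1$ for every $n\ge1$; (iii) $3m_n+2=T^{j_n}(k)$ for every $n\ge1$; (iv) for every $n\ge1$, $j_{n+1}>j_n$ if and only if $3m_n+2\notin\{2^i;\ i\ge2\}$; (v) $(j_n)_{n\ge1}$ and $((6m_n+4)2^{p_n})_{n\ge1}$ are either both strictly increasing or both stationary.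
   Context: $T\colon\mathbf Z_+\to\mathbf Z_+$ is the modified Collatz map: $T(n)=n/2$ for $n$ even, $T(n)=(3n+1)/2$ for $n$ odd. $\mathcal X_\omega$ is the Hilbert space of holomorphic functions $f(z)=\sum_{n\ge3}c_nz^n$ on the unit disk with $\|f\|_\omega^2=\sum_{n\ge3}|c_n|^2/\omega(n)<\infty$. *)

(* Defs.v *)
From Stdlib Require Import Reals Arith.
From Coquelicot Require Import Coquelicot.
Open Scope R_scope.

Definition T (n : nat) : nat :=
  if Nat.even n then Nat.div n 2 else Nat.div (3 * n + 1) 2.

Definition Titer (j : nat) (k : nat) : nat := Nat.iter j T k.

Definition pow2_ge4 (x : nat) : Prop := exists i : nat, (2 <= i)%nat /\ x = (2 ^ i)%nat.

(* A positive weight on Z_+ = {1,2,...} (value at 0 irrelevant). *)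
Definition pos_weight (w : nat -> R) : Prop := forall n : nat, (1 <= n)%nat -> 0 < w n.

(* f(z) = sum_{n>=3} c_n z^n belongs to X_omega:
   the coefficients vanish below 3, the power series converges on the open
   unit disk (f holomorphic there), and sum |c_n|^2 / w(n) < oo. *)
Definition in_X (w : nat -> R) (c : nat -> C) : Prop :=
  (forall n : nat, (n < 3)%nat -> c n = 0%C) /\
  (forall z : C, Cmod z < 1 -> ex_series (fun n : nat => (c n * pow_n z n)%C)) /\
  ex_series (fun n : nat => if (3 <=? n)%nat then (Cmod (c n)) ^ 2 / w n else 0).

(* Main.v *)
Require Import Defs.
From Stdlib Require Import Reals Arith Lia Lra Classical.
From Coquelicot Require Import Coquelicot.
Open Scope R_scope.

Fixpoint dec (f x : nat) : nat * nat :=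
  match f with
  | O => (x, O)
  | S f' => if Nat.even x then let r := dec f' (Nat.div2 x) in (fst r, S (snd r))
            else (x, O)
  end.

Lemma dec_spec : forall f x, (0 < x)%nat -> (x <= f)%nat ->
  x = (fst (dec f x) * 2 ^ snd (dec f x))%nat /\ Nat.odd (fst (dec f x)) = true.
Proof.
  induction f as [|f IH]; intros x Hx Hf; [lia|].
  simpl. destruct (Nat.even x) eqn:E.
  - assert (Hd : x = (2 * Nat.div2 x)%nat).
    { pose proof (Nat.div2_odd x) as H. unfold Nat.odd in H. rewrite E in H. simpl in H. lia. }
    assert (Hd' := Nat.lt_div2 x Hx).
    destruct (IH (Nat.div2 x)) as [H1 H2]; try lia.
    simpl. split; auto. rewrite Nat.mul_comm. simpl. lia.
  - simpl. split; [lia|]. unfold Nat.odd. rewrite E. reflexivity.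
Qed.

Lemma dec_pow2 : forall i f, (2 ^ i <= f)%nat -> dec f (2 ^ i) = (1%nat, i).
Proof.
  induction i as [|i IH]; intros f Hf.
  - destruct f; simpl in *; [lia|]. reflexivity.
  - destruct f as [|f]; [pose proof (Nat.pow_nonzero 2 (S i)); lia|].
    change (dec (S f) (2 ^ S i)) with (if Nat.even (2^S i) then let r := dec f (Nat.div2 (2^S i)) in (fst r, S (snd r)) else ((2^S i)%nat, O)).
    replace (Nat.even (2 ^ S i)) with true.
    2:{ rewrite Nat.pow_succ_r'. rewrite Nat.even_mul. reflexivity. }
    replace (Nat.div2 (2 ^ S i)) with (2 ^ i)%nat.
    2:{ rewrite Nat.pow_succ_r'. rewrite Nat.div2_double. reflexivity. }
    cbv zeta. rewrite IH. reflexivity.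
    pose proof (Nat.pow_nonzero 2 i). rewrite Nat.pow_succ_r' in Hf. lia.
Qed.

Lemma T_double : forall y, T (2 * y) = y.
Proof.
  intro y. unfold T. rewrite Nat.even_mul. simpl Nat.even.
  rewrite Nat.mul_comm, Nat.div_mul; auto.
Qed.

Lemma T_odd : forall m, T (2 * m + 1) = (3 * m + 2)%nat.
Proof.
  intro m. unfold T. replace (Nat.even (2*m+1)) with false.
  2:{ rewrite Nat.even_add, Nat.even_mul. reflexivity. }
  replace (3 * (2 * m + 1) + 1)%nat with ((3*m+2)*2)%nat by lia.
  apply Nat.div_mul; auto.
Qed.

Lemma Titer_pow : forall e o, Titer e (o * 2 ^ e) = o.
Proof.
  induction e as [|e IH]; intro o. unfold Titer; simpl; lia.
  unfold Titer in *. rewrite Nat.iter_succ_r. rewrite Nat.pow_succ_r'.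
  replace (o * (2 * 2 ^ e))%nat with (2 * (o * 2 ^ e))%nat by lia.
  rewrite T_double. apply IH.
Qed.

Lemma odd_decomp : forall o, Nat.odd o = true -> o = (2 * Nat.div2 o + 1)%nat.
Proof.
  intros o H. pose proof (Nat.div2_odd o) as H'. rewrite H in H'. simpl in H'. lia.
Qed.

Definition step (s : nat * nat * nat) : nat * nat * nat :=
  let '(m, p, j) := s in
  let x := (3 * m + 2)%nat in
  let '(o, e) := dec x x in
  if Nat.eqb o 1 then (m, p, j) else (Nat.div2 o, (p + e + 1)%nat, (j + e + 1)%nat).

Lemma step_cases : forall m p j, (1 <= m)%nat ->
  (step (m, p, j) = (m, p, j) /\ pow2_ge4 (3 * m + 2)) \/
  (exists m' e, step (m, p, j) = (m', (p + e + 1)%nat, (j + e + 1)%nat) /\ (1 <= m')%nat /\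
     (3 * m + 2)%nat = ((2 * m' + 1) * 2 ^ e)%nat /\ ~ pow2_ge4 (3 * m + 2)).
Proof.
  intros m p j Hm. unfold step.
  pose proof (dec_spec (3*m+2) (3*m+2) ltac:(lia) ltac:(lia)) as [H1 H2].
  destruct (dec (3 * m + 2) (3 * m + 2)) as [o e] eqn:E. simpl in H1, H2.
  destruct (Nat.eqb_spec o 1) as [Ho|Ho].
  - left. split; auto. subst o. exists e. split; [|lia].
    destruct e as [|[|e]]; simpl in H1; lia.
  - right. exists (Nat.div2 o), e. pose proof (odd_decomp o H2) as Hod.
    split; auto. split; [lia|]. split; [rewrite <- Hod; exact H1|].
    intros [i [Hi Hx]]. rewrite Hx in E. rewrite dec_pow2 in E; [|lia].
    inversion E. congruence.
Qed.

Lemma RtoC_nz : forall x, x <> 0 -> RtoC x <> 0%C.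
Proof. intros x Hx H. apply Hx. injection H. auto. Qed.

Theorem lemma2p5 (w : nat -> R) (c : nat -> C) :
  pos_weight w ->
  in_X w c ->
  (forall n m : nat, (1 <= m)%nat ->
     (c ((6 * m + 4) * 2 ^ n)%nat / RtoC (w ((6 * m + 4) * 2 ^ n)%nat))%C
     = (c ((2 * m + 1) * 2 ^ n)%nat / RtoC (w ((2 * m + 1) * 2 ^ n)%nat))%C
     /\ c (2 ^ (n + 2))%nat = 0%C) ->
  forall k : nat, (3 <= k)%nat -> ~ pow2_ge4 k ->
  exists (m p j : nat -> nat),
    (forall n : nat, (1 <= n)%nat ->
       c k = (RtoC (w ((2 * m 1%nat + 1) * 2 ^ p 1%nat)%nat
                    / w ((6 * m n + 4) * 2 ^ p n)%nat)
              * c ((6 * m n + 4) * 2 ^ p n)%nat)%C) /\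
    (forall n : nat, (1 <= n)%nat -> (1 <= m n)%nat) /\
    (forall n : nat, (1 <= n)%nat -> (3 * m n + 2)%nat = Titer (j n) k) /\
    (forall n : nat, (1 <= n)%nat ->
       ((j n < j (S n))%nat <-> ~ pow2_ge4 (3 * m n + 2)%nat)) /\
    (((forall n : nat, (1 <= n)%nat -> (j n < j (S n))%nat) /\
      (forall n : nat, (1 <= n)%nat ->
         ((6 * m n + 4) * 2 ^ p n < (6 * m (S n) + 4) * 2 ^ p (S n))%nat))
     \/
     ((exists n0 : nat, (1 <= n0)%nat /\
         forall n : nat, (n0 <= n)%nat -> j n = j n0) /\
      (exists n0 : nat, (1 <= n0)%nat /\
         forall n : nat, (n0 <= n)%nat ->
           ((6 * m n + 4) * 2 ^ p n)%nat = ((6 * m n0 + 4) * 2 ^ p n0)%nat))).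
Proof.
  intros Hw _ Hc k Hk Hnp.
  pose proof (dec_spec k k ltac:(lia) ltac:(lia)) as [K1 K2].
  destruct (dec k k) as [o e] eqn:Ek. simpl in K1, K2.
  pose proof (odd_decomp o K2) as Ho.
  set (m1 := Nat.div2 o) in *.
  assert (Hm1 : (1 <= m1)%nat).
  { destruct m1 as [|]; [|lia]. exfalso. apply Hnp. exists e. simpl in Ho.
    rewrite Ho in K1. split; [|lia]. destruct e as [|[|e]]; simpl in K1; lia. }
  assert (Hwk : w k <> 0). { pose proof (Hw k ltac:(lia)). lra. }
  assert (HT1 : Nat.iter (e + 1) T k = (3 * m1 + 2)%nat).
  { rewrite Nat.add_comm, Nat.iter_add. change (Nat.iter 1 T ?x) with (T x).
    fold (Titer e k). rewrite K1, Titer_pow, Ho, T_odd. reflexivity. }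
  set (init := (m1, e, (e + 1)%nat)).
  set (Inv := fun s : nat * nat * nat => let '(m, p, j) := s in
     (1 <= m)%nat /\ (3 * m + 2)%nat = Titer j k /\
     (c ((6 * m + 4) * 2 ^ p)%nat / RtoC (w ((6 * m + 4) * 2 ^ p)%nat))%C
     = (c k / RtoC (w k))%C).
  assert (Hinv : forall i, Inv (Nat.iter i step init)).
  { induction i as [|i IH].
    - change (Inv init). unfold Inv, init. cbv beta iota. split; auto. split.
      + unfold Titer. rewrite HT1. lia.
      + rewrite (proj1 (Hc e m1 Hm1)). rewrite <- Ho, <- K1. reflexivity.
    - change (Inv (step (Nat.iter i step init))). destruct (Nat.iter i step init) as [[m p] j]. destruct IH as [I1 [I2 I3]].
      destruct (step_cases m p j I1) as [[-> _]|[m' [e' [-> [H1 [H2 H3]]]]]].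
      + exact (conj I1 (conj I2 I3)).
      + unfold Inv; cbv beta iota. split; auto. split.
        * unfold Titer. replace (j + e' + 1)%nat with (S e' + j)%nat by lia.
          rewrite Nat.iter_add. fold (Titer j k). rewrite <- I2, H2.
          change (Nat.iter (S e') T ?x) with (T (Titer e' x)). rewrite Titer_pow, T_odd. reflexivity.
        * rewrite (proj1 (Hc _ m' H1)). rewrite <- I3.
          assert (Heq : ((2*m'+1)*2^(p+e'+1) = (6*m+4)*2^p)%nat).
          { rewrite !Nat.pow_add_r. replace (6*m+4)%nat with (2*(3*m+2))%nat by lia.
            rewrite H2. simpl. lia. }
          rewrite Heq. reflexivity. }
  set (st := fun n => Nat.iter (pred n) step init).
  assert (Hst : forall n, (1 <= n)%nat -> st (S n) = step (st n)).
  { intros [|n] Hn; [lia|]. reflexivity. }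
  assert (Hst1 : st 1%nat = init) by reflexivity.
  exists (fun n => fst (fst (st n))), (fun n => snd (fst (st n))), (fun n => snd (st n)).
  split; [|split; [|split; [|split]]].
  - intros n Hn. rewrite Hst1. unfold init. cbn [fst snd].
    pose proof (Hinv (pred n)) as I. fold (st n) in I.
    destruct (st n) as [[m p] j]. cbn [fst snd]. destruct I as [I1 [_ I3]].
    rewrite <- Ho, <- K1.
    set (b := ((6 * m + 4) * 2 ^ p)%nat) in *.
    assert (Hwb : w b <> 0). { pose proof (Hw b ltac:(unfold b; pose proof (Nat.pow_nonzero 2 p); nia)). lra. }
    rewrite RtoC_div by auto.
    pose proof (RtoC_nz _ Hwk). pose proof (RtoC_nz _ Hwb).
    assert (c k = c k / RtoC (w k) * RtoC (w k))%C by (field; auto).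
    rewrite H1, <- I3. field. auto.
  - intros n Hn. pose proof (Hinv (pred n)) as I. fold (st n) in I.
    destruct (st n) as [[m p] j]. apply I.
  - intros n Hn. pose proof (Hinv (pred n)) as I. fold (st n) in I.
    destruct (st n) as [[m p] j]. apply I.
  - intros n Hn. rewrite (Hst n Hn). pose proof (Hinv (pred n)) as I. fold (st n) in I.
    destruct (st n) as [[m p] j]. destruct I as [I1 _].
    destruct (step_cases m p j I1) as [[-> H]|[m' [e' [-> [H1 [H2 H3]]]]]]; simpl.
    + split; [lia|]. tauto.
    + split; [auto|lia].
  - destruct (classic (exists n0, (1 <= n0)%nat /\ step (st n0) = st n0)) as [[n0 [Hn0 Hf]]|Hnf].
    + assert (Hc0 : forall n, (n0 <= n)%nat -> st n = st n0).
      { intros n Hn. induction Hn; auto. rewrite Hst by lia. rewrite IHHn. auto. }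
      right. split; exists n0; split; auto; intros n Hn; rewrite Hc0; auto.
    + left. split.
      * intros n Hn. rewrite (Hst n Hn). pose proof (Hinv (pred n)) as I. fold (st n) in I.
        assert (Hn' : step (st n) <> st n) by (intro; apply Hnf; eauto).
        destruct (st n) as [[m p] j]. destruct I as [I1 _].
        destruct (step_cases m p j I1) as [[Heq _]|[m' [e' [He [H1 [H2 H3]]]]]];
          [congruence|]. rewrite He. simpl. lia.
      * intros n Hn. rewrite (Hst n Hn). pose proof (Hinv (pred n)) as I. fold (st n) in I.
        assert (Hn' : step (st n) <> st n) by (intro; apply Hnf; eauto).
        destruct (st n) as [[m p] j]. destruct I as [I1 _].
        destruct (step_cases m p j I1) as [[Heq _]|[m' [e' [He [H1 [H2 H3]]]]]];
          [congruence|]. rewrite He. cbn [fst snd].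
        replace ((6 * m + 4) * 2 ^ p)%nat with ((2 * m' + 1) * 2 ^ (p + e' + 1))%nat.
        2:{ rewrite !Nat.pow_add_r. replace (6*m+4)%nat with (2*(3*m+2))%nat by lia.
            rewrite H2. simpl. lia. }
        apply Nat.mul_lt_mono_pos_r; [apply Nat.neq_0_lt_0, Nat.pow_nonzero; lia| lia].
Qed.
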